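(* Let $n\in\mathbb N$, let $\lambda$ be an eigenvalue of $\mathfrak P^{(n)}_3+\mathfrak P^{(n)}_4$, and let $e\in\mathbb R^n$ be a corresponding unit eigenvector. (i) If $\lambda\ne1-\frac1n$, then $\langle e,\mathfrak P^{(n)}_1e\rangle=\langle e,\mathfrak P^{(n)}_2e\rangle=1-\frac1{2n}-\frac\lambda2$. (ii) If $\lambda=1-\frac1n$, then $\langle e,\mathfrak P^{(n)}_1e\rangle=0$ and $\langle e,\mathfrak P^{(n)}_2e\rangle=1$ when $n$ is even, while $\langle e,\mathfrak P^{(n)}_1e\rangle=1$ and $\langle e,\mathfrak P^{(n)}_2e\rangle=0$ when $n$ is odd.
   Context: For $n\in\mathbb N$, $\mathfrak P^{(n)}_1,\dots,\mathfrak P^{(n)}_4\in M_n(\mathbb R)$ denote orthogonal projections (real symmetric idempotent matrices) such that (i) $\mathfrak P^{(n)}_1+\dots+\mathfrak P^{(n)}_4=(2-\frac1n)I_n$; (ii) $\operatorname{rk}\mathfrak P^{(n)}_1=\lfloor\frac n2\rfloor-(-1)^n$ and $\operatorname{rk}\mathfrak P^{(n)}_i=\lfloor\frac n2\rfloor$ for $i=2,3,4$; (iii) the only subspaces of $\mathbb C^n$ invariant under all four matrices are $0$ and $\mathbb C^n$. Such quadruples exist for every $n$, and any two of them are simultaneously unitarily equivalent; moreover, any quadruple of orthogonal projections on a Hilbert space summing to $(2-\frac1n)I$ with no nontrivial common invariant closed subspace is unitarily equivalent to one of the four cyclic shifts $(\mathfrak P^{(n)}_{\sigma(1)},\dots,\mathfrak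 P^{(n)}_{\sigma(4)})$, $\sigma$ a power of the cycle $(1\,2\,3\,4)$, and these four are pairwise inequivalent. *)

(* Defs.v *)
From HB Require Import structures.
From mathcomp Require Import all_boot all_order all_algebra.
From mathcomp Require Import reals.
From mathcomp Require Export complex.
Set Implicit Arguments. Unset Strict Implicit. Unset Printing Implicit Defensive.
Import Order.TTheory GRing.Theory Num.Theory.
Local Open Scope ring_scope.

Definition orth_proj (R : realType) (n : nat) (P : 'M[R]_n) : Prop :=
  P^T = P /\ P *m P = P.

Definition complexify (R : realType) (n : nat) (A : 'M[R]_n) : 'M[R[i]]_n :=
  map_mx (real_complex R) A.

(* The subspace of C^n spanned by the rows of U (as column vectors, i.e. the
   column space of U^T) is invariant under the linear map x |-> A x
   (A acting on column vectors). *)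
Definition cinvariant (R : realType) (n : nat) (U : 'M[R[i]]_n) (A : 'M[R]_n) : bool :=
  (U *m (complexify A)^T <= U)%MS.

Definition qform (R : realType) (n : nat) (x : 'cV[R]_n) (A : 'M[R]_n) (y : 'cV[R]_n) : R :=
  (x^T *m A *m y) 0 0.

Definition frakP_quadruple (R : realType) (n : nat) (P1 P2 P3 P4 : 'M[R]_n) : Prop :=
  [/\ [/\ orth_proj P1, orth_proj P2, orth_proj P3 & orth_proj P4],
      P1 + P2 + P3 + P4 = (2 - (n%:R)^-1) %:M,
      [/\ \rank P1 = (if odd n then n./2 + 1 else n./2 - 1)%N,
          \rank P2 = n./2, \rank P3 = n./2 & \rank P4 = n./2]
    & forall U : 'M[R[i]]_n,
        cinvariant U P1 -> cinvariant U P2 -> cinvariant U P3 -> cinvariant U P4 ->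
        (U == 0) || row_full U].

(* Main.v *)
Require Import Defs.
From HB Require Import structures.
From mathcomp Require Import all_boot all_order all_algebra.
From mathcomp Require Import reals complex.
From mathcomp Require Import ring lra.
Set Implicit Arguments. Unset Strict Implicit. Unset Printing Implicit Defensive.
Import Order.TTheory GRing.Theory Num.Theory.
Local Open Scope ring_scope.
Section S.
Variable R : fieldType.

Lemma tr_pid n r : (r <= n)%N -> \tr (pid_mx r : 'M[R]_n) = r%:R.
Proof.
move=> rn; rewrite /mxtrace.
under eq_bigr do rewrite mxE eqxx /=.
rewrite -(big_mkord xpredT (fun i => (i < r)%:R)) (big_cat_nat (leq0n r) rn) /=.
rewrite [X in _ + X]big1_seq ?addr0; last first.
  by move=> i; rewrite mem_index_iota => /andP[_ /andP[ri _]]; rewrite ltnNge ri.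
rewrite big_nat_cond (eq_bigr (fun _ => 1)); last first.
  by move=> i /andP[/andP[_ ->] _].
by rewrite -big_nat_cond sumr_const_nat subn0.
Qed.

Lemma rank_tr n (P : 'M[R]_n) : P *m P = P -> \tr P = (\rank P)%:R.
Proof.
move=> PP.
set C := col_ebase P; set U := row_ebase P; set p := (pid_mx (\rank P) : 'M[R]_n).
have EP : P = C *m p *m U by rewrite mulmx_ebase.
have key : p *m (U *m C) *m p = p.
  have h : C *m (p *m (U *m C) *m p) *m U = C *m p *m U.
    transitivity (P *m P); last by rewrite PP.
    by rewrite EP !mulmxA.
  rewrite -!mulmxA in h.
  move/(congr1 (mulmx (invmx C))): h; rewrite !mulKmx ?col_ebase_unit // => h.
  rewrite !mulmxA in h.
  move/(congr1 (fun M => M *m invmx U)): h; rewrite !mulmxK ?row_ebase_unit //.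
  by rewrite !mulmxA.
have pp : p *m p = p by apply: pid_mx_id; apply: rank_leq_row.
rewrite {1}EP -mulmxA mxtrace_mulC -mulmxA -{1}pp.
by rewrite -mulmxA mxtrace_mulC key tr_pid //; apply: rank_leq_row.
Qed.
End S.
Section Dot.
Variable R : realFieldType.

Definition dot {n} (u w : 'cV[R]_n) := (u^T *m w) 0 0.

Lemma dotC n (u w : 'cV[R]_n) : dot u w = dot w u.
Proof. by rewrite /dot -[in RHS](trmxK u) -trmx_mul [RHS]mxE. Qed.

Lemma dot_mulmx n (M : 'M[R]_n) (u w : 'cV[R]_n) : dot (M *m u) w = dot u (M^T *m w).
Proof. by rewrite /dot trmx_mul mulmxA. Qed.

Lemma dotZr n (u w : 'cV[R]_n) c : dot u (c *: w) = c * dot u w.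
Proof. by rewrite /dot -scalemxAr mxE. Qed.

Lemma dotDr n (u w1 w2 : 'cV[R]_n) : dot u (w1 + w2) = dot u w1 + dot u w2.
Proof. by rewrite /dot mulmxDr mxE. Qed.

Lemma dotBr n (u w1 w2 : 'cV[R]_n) : dot u (w1 - w2) = dot u w1 - dot u w2.
Proof. by rewrite dotDr; congr (_ + _); rewrite /dot mulmxN [LHS]mxE. Qed.

Lemma dotE n (u w : 'cV[R]_n) : dot u w = \sum_k u k 0 * w k 0.
Proof. by rewrite /dot mxE; apply: eq_bigr => k _; rewrite [u^T _ _]mxE. Qed.

End Dot.
Section Proj.
Variable R : realFieldType.
Variables (n : nat) (P Q : 'M[R]_n).
Hypotheses (sP : P^T = P) (iP : P *m P = P) (sQ : Q^T = Q) (iQ : Q *m Q = Q).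

Lemma PQv a (v : 'cV[R]_n) : (P + Q) *m v = a *: v -> P *m (Q *m v) = (a - 1) *: (P *m v).
Proof.
move=> H; have := congr1 (fun w : 'cV_n => P *m w) H.
rewrite mulmxDl mulmxDr !mulmxA iP -scalemxAr => E.
have -> : P *m Q *m v = a *: (P *m v) - P *m v by rewrite -E addrC addKr.
by rewrite scalerBl scale1r.
Qed.

Lemma QPv a (v : 'cV[R]_n) : (P + Q) *m v = a *: v -> Q *m (P *m v) = (a - 1) *: (Q *m v).
Proof.
move=> H; have := congr1 (fun w : 'cV_n => Q *m w) H.
rewrite mulmxDl mulmxDr !mulmxA iQ -scalemxAr => E.
have -> : Q *m P *m v = a *: (Q *m v) - Q *m v by rewrite -E addrK.
by rewrite scalerBl scale1r.
Qed.

Lemma refl_eig a (v : 'cV[R]_n) : (P + Q) *m v = a *: v ->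
  (P + Q) *m ((P - Q) *m v) = (2 - a) *: ((P - Q) *m v).
Proof.
move=> H; have E1 := PQv H; have E2 := QPv H.
rewrite mulmxBl mulmxDl !mulmxBr E1 E2 !mulmxA iP iQ.
move: (P *m v) (Q *m v) => x y.
by apply/matrixP => i j; rewrite !mxE; ring.
Qed.

Lemma refl_sq a (v : 'cV[R]_n) : (P + Q) *m v = a *: v ->
  (P - Q) *m ((P - Q) *m v) = (a * (2 - a)) *: v.
Proof.
move=> H; have E1 := PQv H; have E2 := QPv H.
have H' : P *m v = a *: v - Q *m v by rewrite -H mulmxDl addrK.
rewrite !mulmxBl !mulmxBr E1 E2 !mulmxA iP iQ H'.
move: (Q *m v) => y.
by apply/matrixP => i j; rewrite !mxE; ring.
Qed.

Lemma refl_norm a (v : 'cV[R]_n) : (P + Q) *m v = a *: v ->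
  dot ((P - Q) *m v) ((P - Q) *m v) = a * (2 - a) * dot v v.
Proof.
move=> H; rewrite dot_mulmx linearB /= sP sQ (refl_sq H) dotZr.
by [].
Qed.

Lemma diag_half a (v : 'cV[R]_n) : (P + Q) *m v = a *: v -> a != 1 ->
  dot v (P *m v) = a / 2 * dot v v.
Proof.
move=> H a1.
have s1 : dot v (P *m (Q *m v)) = dot v (Q *m (P *m v)).
  by rewrite -{1}sP -dot_mulmx dotC dot_mulmx sQ.
rewrite (PQv H) (QPv H) !dotZr in s1.
have s2 : dot v (P *m v) + dot v (Q *m v) = a * dot v v.
  by rewrite -dotDr -mulmxDl H dotZr.
have a1' : a - 1 != 0 by rewrite subr_eq0.
have e : dot v (P *m v) = dot v (Q *m v).
  by apply: (mulfI a1').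
rewrite -e in s2; have -> : a / 2 * dot v v = (a * dot v v) / 2 by field.
by rewrite -s2; field.
Qed.

End Proj.
Section Orth.
Variable R : realFieldType.

Lemma dotZl n (u w : 'cV[R]_n) c : dot (c *: u) w = c * dot u w.
Proof. by rewrite dotC dotZr dotC. Qed.

Lemma eig_orth n (A : 'M[R]_n) (sA : A^T = A) (u w : 'cV[R]_n) a b :
  A *m u = a *: u -> A *m w = b *: w -> a != b -> dot u w = 0.
Proof.
move=> Hu Hw ab.
have : a * dot u w = b * dot u w.
  by rewrite -dotZl -Hu dot_mulmx sA Hw dotZr.
move/eqP; rewrite -subr_eq0 -mulrBl mulf_eq0 subr_eq0 (negPf ab) /=.
by move/eqP.
Qed.

Lemma tr_orth n (v : 'I_n -> 'cV[R]_n) (M : 'M[R]_n) :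
  (forall i j, i != j -> dot (v i) (v j) = 0) ->
  (forall i, dot (v i) (v i) != 0) ->
  \tr M = \sum_i dot (v i) (M *m v i) / dot (v i) (v i).
Proof.
move=> orth nz.
pose V : 'M[R]_n := \matrix_(i, j) v j i 0.
pose L : 'M[R]_n := \matrix_(i, j) (v i j 0 / dot (v i) (v i)).
have LV : L *m V = 1%:M.
  apply/matrixP => i j; rewrite !mxE.
  under eq_bigr do rewrite !mxE mulrAC.
  rewrite -mulr_suml -dotE.
  case: (eqVneq i j) => [<-|ij]; first by rewrite mulfV.
  by rewrite orth // mul0r.
have VL := mulmx1C LV.
rewrite -{1}[M]mulmx1 -VL mulmxA mxtrace_mulC /mxtrace.
apply: eq_bigr => i _; rewrite mxE dotE mulr_suml.
apply: eq_bigr => k _.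
rewrite [L i k]mxE [(M *m V) k i]mxE [(M *m v i) k 0]mxE mulrAC.
congr (_ * _ / _); apply: eq_bigr => l _; by rewrite mxE.
Qed.
End Orth.
Section Chain.
Variable R : realFieldType.
Variables (n : nat) (P1 P2 P3 P4 : 'M[R]_n).
Hypotheses (s1 : P1^T = P1) (i1 : P1 *m P1 = P1) (s2 : P2^T = P2) (i2 : P2 *m P2 = P2)
  (s3 : P3^T = P3) (i3 : P3 *m P3 = P3) (s4 : P4^T = P4) (i4 : P4 *m P4 = P4)
  (hsum : P1 + P2 + P3 + P4 = (2 - (n%:R)^-1)%:M) (n0 : (0 < n)%N).

Let g : R := 2 - (n%:R)^-1.

Lemma nR0 : (n%:R : R) != 0.
Proof. by rewrite pnatr_eq0 -lt0n. Qed.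

Lemma B_eig (v : 'cV[R]_n) a : (P1 + P2) *m v = a *: v -> (P3 + P4) *m v = (g - a) *: v.
Proof.
move=> H.
have -> : P3 + P4 = g%:M - (P1 + P2) by rewrite /g -hsum; apply/matrixP => i j; rewrite !mxE; ring.
by rewrite mulmxBl mul_scalar_mx H -scalerBl.
Qed.


Lemma A_eig (v : 'cV[R]_n) b : (P3 + P4) *m v = b *: v -> (P1 + P2) *m v = (g - b) *: v.
Proof.
move=> H.
have -> : P1 + P2 = g%:M - (P3 + P4) by rewrite /g -hsum; apply/matrixP => i j; rewrite !mxE; ring.
by rewrite mulmxBl mul_scalar_mx H -scalerBl.
Qed.

Lemma nR_gt0 : 0 < (n%:R : R).
Proof. by rewrite ltr0n. Qed.

Lemma frac_lt1 c : (c < n)%N -> c%:R / n%:R < 1 :> R.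
Proof. by move=> cn; rewrite ltr_pdivrMr ?nR_gt0 // mul1r ltr_nat. Qed.

Lemma frac_ge0 c : 0 <= c%:R / n%:R :> R.
Proof. by rewrite divr_ge0 ?ler0n. Qed.

Lemma frac_gt0 c : (0 < c)%N -> 0 < c%:R / n%:R :> R.
Proof. by move=> c0; rewrite divr_gt0 ?ltr0n ?nR_gt0. Qed.

Fixpoint chain (x : 'cV[R]_n) (k : nat) : 'cV[R]_n :=
  match k with 0 => x | k'.+1 => (if odd k' then P1 - P2 else P3 - P4) *m chain x k' end.

Definition aa (k : nat) : R :=
  if odd k then 1 - (k.+1)%:R / n%:R else 1 + k%:R / n%:R.

Lemma chain_inv (x : 'cV[R]_n) : (P1 + P2) *m x = x -> dot x x != 0 ->
  forall k, (k < n)%N ->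
  (P1 + P2) *m chain x k = aa k *: chain x k /\ dot (chain x k) (chain x k) != 0.
Proof.
move=> Hx nx; elim=> [|k IH] kn.
  by rewrite /aa /= mul0r addr0 scale1r.
have [Hk nk] := IH (ltnW kn).
have l1 := frac_lt1 kn; have l0 := frac_ge0 k.+1.
rewrite /=; case: (boolP (odd k)) => ok.
  have E := refl_eig i1 i2 Hk.
  split.
    by rewrite E /aa /= ok /=; congr (_ *: _); ring.
  rewrite (refl_norm s1 i1 s2 i2 Hk) mulf_neq0 // mulf_neq0 //;
    apply: lt0r_neq0; rewrite /aa ok; lra.
have HB := B_eig Hk.
have E := refl_eig i3 i4 HB.
split.
  rewrite (A_eig E) /aa /= (negPf ok) /= /g; congr (_ *: _).
  rewrite -!natr1; field; exact: nR0.
rewrite (refl_norm s3 i3 s4 i4 HB) mulf_neq0 // mulf_neq0 //;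
  apply: lt0r_neq0; rewrite /aa (negPf ok) /g.
- have -> : 2 - n%:R^-1 - (1 + k%:R / n%:R) = 1 - k.+1%:R / n%:R :> R.
    rewrite -!natr1; field; exact: nR0.
  lra.
- have -> : 2 - (2 - n%:R^-1 - (1 + k%:R / n%:R)) = 1 + k.+1%:R / n%:R :> R.
    rewrite -!natr1; field; exact: nR0.
  lra.
Qed.

Lemma frac_inj a b : a%:R / n%:R = b%:R / n%:R :> R -> a = b.
Proof. by move/(mulIf (invr_neq0 nR0))/eqP; rewrite eqr_nat => /eqP. Qed.

Lemma aa_inj i j : (i < n)%N -> (j < n)%N -> aa i = aa j -> i = j.
Proof.
move=> ilt jlt; rewrite /aa.
have fi := frac_ge0 i; have fj := frac_ge0 j.
have fi1 := frac_gt0 (ltn0Sn i); have fj1 := frac_gt0 (ltn0Sn j).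
case: (odd i); case: (odd j) => h.
- have : i.+1%:R / n%:R = j.+1%:R / n%:R :> R by lra.
  by move/frac_inj; case.
- exfalso; lra.
- exfalso; lra.
- have : i%:R / n%:R = j%:R / n%:R :> R by lra.
  by move/frac_inj.
Qed.

Lemma sum_aa k : \sum_(i < k) aa i = k%:R - (if odd k then 0 else k%:R / n%:R).
Proof.
elim: k => [|k IH]; first by rewrite big_ord0 /= mul0r subr0.
rewrite big_ord_recr /= IH /aa; case: (odd k) => /=; rewrite -?natr1; ring.
Qed.

Lemma chain_trace (x : 'cV[R]_n) : (P1 + P2) *m x = x -> dot x x != 0 ->
  \tr P1 = dot x (P1 *m x) / dot x x + ((n%:R - (if odd n then 0 else 1)) - 1) / 2.
Proof.
move=> Hx nx.
have ci := chain_inv Hx nx.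
have sA : (P1 + P2)^T = P1 + P2 by rewrite linearD /= s1 s2.
rewrite (@tr_orth _ _ (fun i : 'I_n => chain x i)); last first.
- by move=> i; exact: (ci i (ltn_ord i)).2.
- move=> i j ij.
  apply: (eig_orth sA (ci i (ltn_ord i)).1 (ci j (ltn_ord j)).1).
  apply/eqP => /(aa_inj (ltn_ord i) (ltn_ord j)) /val_inj eij.
  by rewrite eij eqxx in ij.
pose o : 'I_n := Ordinal n0.
have aa0 : aa 0 = 1 by rewrite /aa /= mul0r addr0.
rewrite (bigD1 o) //=; congr (_ + _).
have -> : \sum_(i < n | i != o) dot (chain x i) (P1 *m chain x i) / dot (chain x i) (chain x i)
    = \sum_(i < n | i != o) aa i / 2.
  apply: eq_bigr => i io; have [Hi ni] := ci i (ltn_ord i).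
  rewrite (diag_half s1 i1 s2 i2 Hi) ?mulfK //.
  apply/eqP => h; move/negP: io; apply; apply/eqP/val_inj => /=.
  by apply: aa_inj => //; rewrite h aa0.
have := sum_aa n; rewrite (bigD1 o) //= aa0 => h.
rewrite -mulr_suml.
have -> : \sum_(i < n | i != o) aa i = n%:R - (if odd n then 0 else n%:R / n%:R) - 1.
  by rewrite -h; ring.
case: (odd n) => //.
by rewrite divff // nR0.
Qed.

End Chain.

Theorem proposition4p5 (R : realType) (n : nat) (P1 P2 P3 P4 : 'M[R]_n)
  (lambda : R) (e : 'cV[R]_n) :
  (0 < n)%N ->
  frakP_quadruple P1 P2 P3 P4 ->
  (P3 + P4) *m e = lambda *: e ->
  (e^T *m e) 0 0 = 1 ->
  (lambda != 1 - (n%:R)^-1 ->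
     qform e P1 e = 1 - (2 * n%:R)^-1 - lambda / 2 /\
     qform e P2 e = 1 - (2 * n%:R)^-1 - lambda / 2) /\
  (lambda = 1 - (n%:R)^-1 ->
     (~~ odd n -> qform e P1 e = 0 /\ qform e P2 e = 1) /\
     (odd n -> qform e P1 e = 1 /\ qform e P2 e = 0)).
Proof.
move=> n0 [[[s1 i1] [s2 i2] [s3 i3] [s4 i4]] hsum [r1 _ _ _] _] He ee.
have qE : forall P, qform e P e = dot e (P *m e) by move=> P; rewrite /qform /dot mulmxA.
have ee' : dot e e = 1 by [].
have nz := @nR0 R n n0.
have HA := A_eig hsum He.
split.
  move=> ln.
  have a1 : 2 - (n%:R)^-1 - lambda != 1.
    by apply: contra ln => /eqP h; apply/eqP; lra.
  have HA' : (P2 + P1) *m e = (2 - (n%:R)^-1 - lambda) *: e by rewrite addrC.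
  rewrite !qE (diag_half s1 i1 s2 i2 HA a1) (diag_half s2 i2 s1 i1 HA' a1) ee'.
  by split; field.
move=> ln.
have HA1 : (P1 + P2) *m e = e.
  by rewrite HA ln (_ : 2 - (n%:R)^-1 - (1 - (n%:R)^-1) = 1) ?scale1r //; ring.
have HA1s : (P1 + P2) *m e = 1 *: e by rewrite scale1r.
have E21 : P2 *m (P1 *m e) = 0 by rewrite (QPv i2 HA1s) subrr scale0r.
have E12 : P1 *m (P2 *m e) = 0 by rewrite (PQv i1 HA1s) subrr scale0r.
have Ax : (P1 + P2) *m (P1 *m e) = P1 *m e by rewrite mulmxDl mulmxA i1 E21 addr0.
have Ay : (P1 + P2) *m (P2 *m e) = P2 *m e by rewrite mulmxDl E12 add0r mulmxA i2.
have dx : dot (P1 *m e) (P1 *m e) = dot e (P1 *m e) by rewrite dot_mulmx s1 mulmxA i1.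
have dy : dot (P2 *m e) (P2 *m e) = dot e (P2 *m e) by rewrite dot_mulmx s2 mulmxA i2.
have sumE : dot e (P1 *m e) + dot e (P2 *m e) = 1 by rewrite -dotDr -mulmxDl HA1.
have tr1 := rank_tr i1.
have hn := odd_double_half n.
split.
  move=> ev.
  have d0 : dot e (P1 *m e) = 0.
    apply/eqP; apply/negPn/negP => nzx; rewrite -dx in nzx.
    have := chain_trace s1 i1 s2 i2 s3 i3 s4 i4 hsum n0 Ax nzx.
    rewrite tr1 r1 (negPf ev) mulmxA i1 divff //.
    rewrite (negPf ev) add0n in hn.
    have h1 : (1 <= n./2)%N by rewrite -hn in n0; rewrite -double_gt0.
    rewrite natrB // -{2}hn -muln2 natrM.
    move: (n./2%:R : R) => h; lra.
  rewrite !qE d0; split => //; lra.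
move=> od.
have d0 : dot e (P2 *m e) = 0.
  apply/eqP; apply/negPn/negP => nzy; rewrite -dy in nzy.
  have := chain_trace s1 i1 s2 i2 s3 i3 s4 i4 hsum n0 Ay nzy.
  rewrite tr1 r1 od E12 /dot mulmx0 mxE mul0r.
  rewrite od in hn.
  rewrite -{2}hn /= !natrD -muln2 natrM.
  move: (n./2%:R : R) => h; lra.
rewrite !qE d0; split => //; lra.
Qed.
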